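(* Let $f:\mathbb{N}\to\mathbb{R}$ with $f(1)=1$. Assume there exist an integer $N\geq2$, $C>0$ and $\gamma\in\mathbb{R}$ such that $f(n)=0$ for all $2\leq n\leq N$ and $|f(n)|\leq Cn^\gamma$ for all $n>N$. Then $$|f^{-1}(n)|\leq n^{\gamma+\varsigma}, \quad n>N,$$ where $\varsigma>1$ is the unique root of $\zeta(s)=\frac{1}{C}+\sum_{m=1}^{N} m^{-s}$.
   Context: $f^{-1}$ denotes the Dirichlet inverse of $f$: the arithmetic function with $\sum_{d\mid n} f(n/d) f^{-1}(d)=\varepsilon(n)$ for all $n$, where $\varepsilon(1)=1$ and $\varepsilon(n)=0$ for $n\ge2$. $\zeta$ is the Riemann zeta function. *)

(* Defs.v *)
From HB Require Import structures.
From mathcomp Require Import all_boot all_order all_algebra.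
From mathcomp Require Import all_classical all_reals all_analysis.
Set Implicit Arguments. Unset Strict Implicit. Unset Printing Implicit Defensive.
Import Order.TTheory GRing.Theory Num.Theory.
Local Open Scope ring_scope.

(* Arithmetic functions are maps nat -> R; only values at n >= 1 matter. *)

Definition dirichlet_inverse (R : realType) (f g : nat -> R) : Prop :=
  forall n : nat, (0 < n)%N ->
    \sum_(d <- divisors n) f (n %/ d)%N * g d = (n == 1%N)%:R.

(* Riemann zeta on reals: zeta(s) = sum_{m >= 1} m^{-s} (limit of partial sums, meaningful for s > 1). *)
Definition zeta (R : realType) (s : R) : R :=
  limn (fun n : nat => \sum_(1 <= m < n) ((m%:R : R) `^ (- s))).

(* Main.v *)
Require Import Defs.
From HB Require Import structures.
From mathcomp Require Import all_boot all_order all_algebra.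
From mathcomp Require Import all_classical all_reals all_analysis.
From mathcomp Require Import zify ring lra.
Import numFieldNormedType.Exports.
Local Open Scope classical_set_scope.
Local Open Scope ring_scope.
Import Order.TTheory GRing.Theory Num.Theory.
Local Open Scope ring_scope.
Set Implicit Arguments. Unset Strict Implicit.

Section Z.
Variable R : realType.
Definition tt (s : R) (m : nat) : R := (m%:R : R) `^ (- s).
Definition P (s : R) (n : nat) : R := \sum_(1 <= m < n) tt s m.

Lemma tt_exp s m : (0 < m)%N -> tt s m = expR (- s * ln m%:R).
Proof. by move=> m0; rewrite /tt /powR pnatr_eq0; case: m m0. Qed.

Lemma tt_ge0 s m : 0 <= tt s m.
Proof. exact: powR_ge0. Qed.

Lemma ln_nat_ge0 m : (0 < m)%N -> 0 <= ln (m%:R : R).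
Proof. by move=> m0; apply: ln_ge0; rewrite ler1n. Qed.

Lemma tt_anti s u m : (0 < m)%N -> s <= u -> tt u m <= tt s m.
Proof.
move=> m0 su; rewrite !tt_exp // ler_expR.
have := ln_nat_ge0 m0; nra.
Qed.

Lemma P_S s n : P s n.+1 = P s n + (if (0 < n)%N then tt s n else 0).
Proof.
rewrite /P; case: n => [|n]; first by rewrite !big_geq // addr0.
by rewrite big_nat_recr.
Qed.

Lemma P_nd s : nondecreasing_seq (P s).
Proof.
apply/nondecreasing_seqP => n; rewrite P_S lerDl; case: ifP => // _; exact: tt_ge0.
Qed.

Lemma P_ge0 s n : 0 <= P s n.
Proof. by apply: sumr_ge0 => m _; exact: tt_ge0. Qed.

Lemma ln_pred_le (x : R) : 1 < x -> ln (x - 1) <= ln x - x^-1.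
Proof.
move=> x1; have x0 : 0 < x by apply: lt_trans x1.
have -> : x - 1 = x * (1 + (- x^-1)) by field; rewrite gt_eqF.
rewrite lnM ?posrE //; last first.
  rewrite subr_gt0 invf_lt1 //.
rewrite lerD2l; apply: le_ln1Dx.
rewrite ltrN2 invf_lt1 //.
Qed.

Lemma expRNln (x : R) : 0 < x -> expR (- ln x) = x^-1.
Proof. by move=> x0; rewrite expRN lnK. Qed.

Lemma key_ineq (s : R) k : 1 < s ->
  (s - 1) * tt s k.+2 + tt (s - 1) k.+2 <= tt (s - 1) k.+1.
Proof.
move=> s1; rewrite !tt_exp //.
set x : R := k.+2%:R.
have x1 : 1 < x by rewrite /x ltr1n.
have x0 : 0 < x by apply: lt_trans x1.
have -> : (k.+1%:R : R) = x - 1 by rewrite /x -[k.+2]addn1 natrD addrK.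
have hl := ln_pred_le x1.
set L := ln x in hl *; set L' := ln (x - 1) in hl *.
have e1 : expR (- s * L) = expR (- (s - 1) * L) * x^-1.
  rewrite -(expRNln x0) -expRD; congr expR.
  rewrite /L; ring.
have e2 : expR (- (s - 1) * L') = expR (- (s - 1) * L) * expR ((s - 1) * (L - L')).
  by rewrite -expRD; congr expR; ring.
rewrite e1 e2.
have h3 := expR_ge1Dx ((s - 1) * (L - L')).
have h4 : 0 < expR (- (s - 1) * L) := expR_gt0 _.
set E := expR (- (s - 1) * L) in h4 *.
set F := expR ((s - 1) * (L - L')) in h3 *.
have : (s - 1) * x^-1 <= (s - 1) * (L - L').
  clearbody x L L' E F.
  apply: ler_wpM2l; lra.
clearbody x L L' E F.
nra.
Qed.

Lemma tt1 s : tt s 1 = 1.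
Proof. by rewrite /tt powR1. Qed.

Lemma P_bound s n : 1 < s -> P s n <= 1 + (s - 1)^-1.
Proof.
move=> s1; have a0 : 0 < s - 1 by lra.
have ai0 : 0 < (s - 1)^-1 by rewrite invr_gt0.
have claim k : P s k.+2 + tt (s - 1) k.+1 / (s - 1) <= 1 + (s - 1)^-1.
  elim: k => [|k IH].
    by rewrite /P big_nat1 !tt1 mul1r.
  rewrite P_S /=; apply: le_trans IH.
  rewrite -addrA lerD2l.
  have := key_ineq k s1.
  move=> h.
  have hh : (s - 1) * (s - 1)^-1 = 1 by rewrite divff // gt_eqF.
  move: h hh ai0; set A := tt s _; set B := tt _ k.+2; set Cc := tt _ k.+1.
  set i := (s - 1)^-1; move=> h hh ai0.
  have h2 : 0 <= Cc - ((s - 1) * A + B) by rewrite subr_ge0.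
  have h3 : (s - 1) * i * A = A by rewrite hh mul1r.
  have := mulr_ge0 (ltW ai0) h2; clearbody A B Cc i.
  nra.
case: n => [|[|k]].
- by rewrite /P big_geq //; lra.
- by rewrite /P big_geq //; lra.
- apply: le_trans (claim k); rewrite lerDl; apply: mulr_ge0; [exact: tt_ge0 | exact: ltW].
Qed.

Lemma P_cvg s : 1 < s -> cvgn (P s).
Proof.
move=> s1; apply: nondecreasing_is_cvgn; first exact: P_nd.
exists (1 + (s - 1)^-1) => _ [n _ <-]; exact: P_bound.
Qed.

Lemma P_le_zeta s n : 1 < s -> P s n <= zeta s.
Proof. move=> s1; exact: (nondecreasing_cvgn_le (P_nd s) (P_cvg s1)). Qed.


Lemma zeta_cvg (s : R) : 1 < s -> P s @ \oo --> zeta s.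
Proof. by move=> s1; exact: (P_cvg s1). Qed.

Lemma D_nd s u : s <= u -> nondecreasing_seq (fun n => P s n - P u n).
Proof.
move=> su; apply/nondecreasing_seqP => n; rewrite !P_S.
case: ifP => n0; last by rewrite !addr0.
have := tt_anti n0 su; lra.
Qed.

Lemma zeta_diff_ge (s u : R) k : 1 < s -> s <= u -> P s k - P u k <= zeta s - zeta u.
Proof.
move=> s1 su; have u1 : 1 < u by apply: lt_le_trans s1 su.
have c : (fun n => P s n - P u n) @ \oo --> zeta s - zeta u.
  by apply: cvgB; exact: zeta_cvg.
rewrite -(cvg_lim _ c) //; apply: (nondecreasing_cvgn_le (D_nd su)).
by apply/cvg_ex; exists (zeta s - zeta u).
Qed.

Lemma zeta_anti (s u : R) : 1 < s -> s <= u -> zeta u <= zeta s.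
Proof. move=> s1 su; have := zeta_diff_ge 0 s1 su; rewrite /P !big_geq //; lra. Qed.

Lemma tt_lip (s u e : R) m : (0 < m)%N -> 0 < e -> s <= u ->
  tt s m - tt u m <= (u - s) / e * tt (s - e) m.
Proof.
move=> m0 e0 su; rewrite !tt_exp //.
have L0 := ln_nat_ge0 m0; set L := ln _ in L0 *.
have -> : expR (- u * L) = expR (- s * L) * expR (- ((u - s) * L)) by rewrite -expRD; congr expR; ring.
have -> : expR (- (s - e) * L) = expR (- s * L) * expR (e * L) by rewrite -expRD; congr expR; ring.
have h1 := expR_ge1Dx (- ((u - s) * L)).
have h2 := expR_ge1Dx (e * L).
have h4 : 0 < expR (- s * L) := expR_gt0 _.
set A := expR (- s * L) in h4 *; set B := expR (- ((u - s) * L)) in h1 *.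
set E := expR (e * L) in h2 *; clearbody A B E L.
have ie0 : 0 < e^-1 by rewrite invr_gt0.
have hh : e * e^-1 = 1 by rewrite divff // gt_eqF.
set i := e^-1 in ie0 hh *; clearbody i.
have us : 0 <= u - s by lra.
(* A(1-B) <= A (u-s) L <= A (u-s) (E-1) i <= (u - s) i A E *)
have k1 : A * (1 - B) <= A * ((u - s) * L) by apply: ler_wpM2l; lra.
have k2 : L <= (E - 1) * i.
  have : e * L * i <= (E - 1) * i by apply: ler_wpM2r; lra.
  by rewrite mulrC mulrA (mulrC i) hh mul1r.
have k3 : A * ((u - s) * L) <= A * ((u - s) * ((E - 1) * i)).
  by apply: ler_wpM2l; [lra|]; apply: ler_wpM2l.
have k4 : 0 <= A * (u - s) * i by apply: mulr_ge0; [apply: mulr_ge0|]; lra.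
nra.
Qed.

Lemma P_lip (s u e : R) n : 0 < e -> s <= u ->
  P s n - P u n <= (u - s) / e * P (s - e) n.
Proof.
move=> e0 su; rewrite /P -sumrB mulr_sumr; apply: ler_sum_nat => m /andP[m1 _].
exact: tt_lip.
Qed.

Lemma zeta_lip (s u e : R) : 0 < e -> 1 < s - e -> s <= u ->
  zeta s - zeta u <= (u - s) / e * zeta (s - e).
Proof.
move=> e0 se su; have s1 : 1 < s by lra.
have u1 : 1 < u by lra.
have c : (fun n => P s n - P u n) @ \oo --> zeta s - zeta u.
  by apply: cvgB; exact: zeta_cvg.
rewrite -(cvg_lim _ c) //; apply: limr_le; first by apply/cvg_ex; eexists; exact: c.
apply: nearW => n; apply: le_trans (P_lip n e0 su) _.
apply: ler_wpM2l; last exact: P_le_zeta.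
apply: mulr_ge0; first lra; by rewrite invr_ge0 ltW.
Qed.

Lemma P_diff_ge0 s u n : s <= u -> 0 <= P s n - P u n.
Proof.
move=> su; rewrite subr_ge0 /P; apply: ler_sum_nat => m /andP[m1 _]; exact: tt_anti.
Qed.


Lemma cont_of_eps (f : R -> R) x : (forall eps, 0 < eps -> exists2 d, 0 < d &
  forall y, `|x - y| < d -> `|f x - f y| <= eps) -> {for x, continuous f}.
Proof.
move=> H; apply/cvgrPdist_le => eps eps0.
have [d d0 Hd] := H eps eps0.
by apply/nbhs_ballP; exists d.
Qed.

Definition T (N : nat) (s : R) := zeta s - P s N.+1.

Lemma tt_strict (s u : R) m : (1 < m)%N -> s < u -> tt u m < tt s m.
Proof.
move=> m1 su; rewrite !tt_exp; try by apply: ltn_trans m1.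
rewrite ltr_expR; have : 0 < ln (m%:R : R) by apply: ln_gt0; rewrite ltr1n.
nra.
Qed.

Lemma T_strict N (s u : R) : (0 < N)%N -> 1 < s -> s < u -> T N u < T N s.
Proof.
move=> N0 s1 su; have h := zeta_diff_ge N.+2 s1 (ltW su).
rewrite /T; move: h; rewrite !P_S /=.
have := @tt_strict s u N.+1 N0 su.
lra.
Qed.

Lemma T_lip N (s u e : R) : 0 < e -> 1 < s - e -> s <= u ->
  `|T N s - T N u| <= (u - s) / e * zeta (s - e).
Proof.
move=> e0 se su; have s1 : 1 < s by lra.
have h1 := zeta_lip e0 se su.
have h2 := zeta_anti s1 su.
have h3 := P_lip N.+1 e0 su.
have h4 := P_diff_ge0 N.+1 su.
have h5 : P (s - e) N.+1 <= zeta (s - e) := P_le_zeta _ se.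
have h6 : 0 <= (u - s) / e by apply: mulr_ge0; [lra | rewrite invr_ge0 ltW].
have h7 := ler_wpM2l h6 h5.
rewrite /T ler_norml; apply/andP; split; lra.
Qed.

Lemma T_cont N (x : R) : 1 < x -> {for x, continuous (T N)}.
Proof.
move=> x1; apply: cont_of_eps => eps eps0.
set e := (x - 1) / 4.
have e0 : 0 < e by rewrite /e; lra.
set B := zeta (x - 2 * e) / e.
have x2e : 1 < x - 2 * e by rewrite /e; lra.
have B0 : 0 <= B.
  apply: mulr_ge0; last by rewrite invr_ge0 ltW.
  apply: le_trans (P_le_zeta 0 x2e); exact: P_ge0.
have K0 : 0 < B + 1 by lra.
exists (Num.min e (eps / (B + 1))).
  by rewrite lt_min e0 divr_gt0.
move=> y; rewrite lt_min => /andP[hye hyd].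
have key : `|T N x - T N y| <= `|x - y| * B.
  have gen (s u : R) : `|x - s| < e -> s <= u -> `|x - u| < e ->
      `|T N s - T N u| <= (u - s) * B.
    move=> hs su hu.
    have se : 1 < s - e by move: hs; rewrite ltr_norml /e; lra.
    apply: le_trans (T_lip N e0 se su) _.
    rewrite /B mulrA mulrAC; apply: ler_wpM2r; first by rewrite invr_ge0 ltW.
    apply: ler_wpM2l; first lra.
    apply: zeta_anti x2e _; move: hs; rewrite ltr_norml /e; lra.
  have hx : `|x - x| < e by rewrite subrr normr0.
  case: (lerP x y) => xy.
    apply: le_trans (gen _ _ hx xy hye) _; rewrite ler_wpM2r // distrC ger0_norm; lra.
  rewrite distrC; apply: le_trans (gen _ _ hye (ltW xy) hx) _.
  rewrite ler_wpM2r // ger0_norm; lra.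
apply: le_trans key _.
have : `|x - y| * (B + 1) <= eps.
  by move: hyd; rewrite ltr_pdivlMr // => /ltW.
have := normr_ge0 (x - y); nra.
Qed.


Definition Hs (n : nat) : R := \sum_(1 <= m < n) (m%:R)^-1.

Lemma Hs_series n : Hs n.+1 = series (@harmonic R) n.
Proof.
elim: n => [|n IH]; first by rewrite /Hs big_geq // /series /= big_geq.
by rewrite seriesSr -IH /Hs big_nat_recr.
Qed.

Lemma Hs_unbounded (X : R) : exists n, X < Hs n.
Proof.
apply: contrapT => hn.
have hb : has_ubound (range (series (@harmonic R))).
  exists X => _ [n _ <-]; rewrite -Hs_series.
  by rewrite leNgt; apply/negP => h; apply: hn; exists n.+1.
apply: (@dvg_harmonic R); apply: nondecreasing_is_cvgn => //.
apply/nondecreasing_seqP => n; rewrite seriesSr lerDl; exact: harmonic_ge0.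
Qed.

Lemma P_le_N (a : R) N : 0 <= a -> P a N.+1 <= N%:R.
Proof.
move=> a0; apply: le_trans (_ : \sum_(1 <= m < N.+1) (1 : R) <= _).
  apply: ler_sum_nat => m /andP[m1 _]; rewrite tt_exp //.
  rewrite -[X in _ <= X]expR0 ler_expR; have := ln_nat_ge0 m1; nra.
by rewrite sumr_const_nat subn1 /=.
Qed.

Lemma T_big N (c : R) : 0 < c -> exists a, 1 < a /\ c <= T N a.
Proof.
move=> c0.
have [n hn] := Hs_unbounded (2 * (c + N%:R)).
set L := ln (n%:R : R) + 1.
have hL : forall m, (0 < m)%N -> (m < n)%N -> ln (m%:R : R) < L.
  move=> m m0 mn; rewrite /L.
  have : ln (m%:R : R) <= ln n%:R.
    have n0 : (0 < n)%N by apply: leq_ltn_trans mn.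
    rewrite ler_ln ?posrE ?ltr0n // ler_nat; exact: ltnW.
  lra.
have n0 : (0 < n)%N.
  case: (n) hn => // ; rewrite /Hs big_geq //; have : (0 : R) <= N%:R by []; lra.
have L1 : 1 <= L by rewrite /L lerDr; apply: ln_nat_ge0.
clearbody L.
set d := (2 * L)^-1.
have dL : d * L = 1 / 2 by rewrite /d; field; rewrite gt_eqF //; lra.
have d0 : 0 < d by rewrite /d invr_gt0; lra.
exists (1 + d); split; first lra.
have hP : Hs n / 2 <= P (1 + d) n.
  rewrite /Hs /P mulr_suml; apply: ler_sum_nat => m /andP[m1 mn].
  rewrite tt_exp //.
  have -> : expR (- (1 + d) * ln (m%:R : R)) =
     expR (- ln (m%:R : R)) * expR (- (d * ln (m%:R : R))).
    by rewrite -expRD; congr expR; ring.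
  rewrite expRNln ?ltr0n //.
  have h1 := expR_ge1Dx (- (d * ln (m%:R : R))).
  have h2 : d * ln (m%:R : R) <= 1 / 2.
    rewrite -dL; apply: ler_wpM2l; [lra | exact: ltW (hL m m1 mn)].
  have h3 : 0 < (m%:R : R)^-1 by rewrite invr_gt0 ltr0n.
  set E := expR _ in h1 *; clearbody E; set i := (m%:R : R)^-1 in h3 *.
  nra.
have h4 := P_le_zeta n (_ : 1 < 1 + d).
have h5 := P_le_N N (_ : 0 <= 1 + d).
rewrite /T; lra.
Qed.


Lemma T_small N (c : R) : (0 < N)%N -> 0 < c -> exists b, 1 < b /\ T N b <= c.
Proof.
move=> N0 c0.
have one2 : (1 : R) < 2 by lra.
set Z := zeta (2 : R).
have Z0 : 0 <= Z by apply: le_trans (P_le_zeta 0 one2); exact: P_ge0.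
set L := ln (N.+1%:R : R).
have L0 : 0 < L by apply: ln_gt0; rewrite ltr1n ltnS.
set y := Z / (c * L).
have y0 : 0 <= y by apply: divr_ge0 => //; apply: mulr_ge0; apply: ltW.
have yL : y * L = Z / c by rewrite /y; field; apply/andP; split; rewrite gt_eqF.
set K := expR (- (y * L)).
have K0 : 0 < K := expR_gt0 _.
have KZ : K * Z <= c.
  have h := expR_ge1Dx (y * L).
  have hK : K * expR (y * L) = 1 by rewrite /K -expRD addNr expR0.
  have ci : c * (Z / c) = Z by field; rewrite gt_eqF.
  set E := expR (y * L) in h hK; clearbody E K; rewrite yL in h.
  set W := Z / c in h ci; clearbody W.
  have h1 : K * (1 + W) <= K * E by apply: ler_wpM2l; [exact: ltW | exact: h].
  have h2 : K * W <= 1 by lra.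
  have h3 : c * (K * W) <= c * 1 by apply: ler_wpM2l; [exact: ltW | exact: h2].
  rewrite -ci; lra.
exists (2 + y); split; first lra.
apply: le_trans KZ; rewrite /T.
have cv : (fun n => P (2 + y) n - P (2 + y) N.+1) @ \oo --> zeta (2 + y) - P (2 + y) N.+1.
  by apply: cvgB; [apply: zeta_cvg; lra | exact: cvg_cst].
rewrite -(cvg_lim _ cv) //; apply: limr_le; first by apply/cvg_ex; eexists; exact: cv.
apply: nearW => n.
case: (leqP n N.+1) => hn.
  have := P_nd (2 + y) hn.
  have : 0 <= K * Z by apply: mulr_ge0 => //; exact: ltW.
  lra.
have hn2 : (N.+1 <= n)%N by exact: ltnW.
have ab : forall a b : R, a + b - a = b by move=> a b; ring.
rewrite /P (@big_cat_nat _ _ _ N.+1) //= ab.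
apply: le_trans (_ : K * \sum_(N.+1 <= m < n) tt 2 m <= _).
  rewrite mulr_sumr; apply: ler_sum_nat => m /andP[Nm mn].
  have m0 : (0 < m)%N by apply: leq_trans Nm.
  rewrite !tt_exp //.
  have -> : expR (- (2 + y) * ln (m%:R : R)) = expR (- (y * ln (m%:R : R))) * expR (- 2 * ln (m%:R : R)).
    by rewrite -expRD; congr expR; ring.
  apply: ler_wpM2r; first exact: expR_ge0.
  rewrite /K ler_expR lerN2; apply: ler_wpM2l => //.
  by rewrite ler_ln ?posrE ?ltr0n // ler_nat.
apply: ler_wpM2l; first exact: ltW.
apply: le_trans (P_le_zeta n one2).
rewrite /P [X in _ <= X](@big_cat_nat _ _ _ N.+1) //=.
rewrite -[X in X <= _]add0r; apply: lerD; [exact: P_ge0 | exact: lexx].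
Qed.


Lemma div_div_id n d : (0 < n)%N -> (d %| n)%N -> (n %/ (n %/ d))%N = d.
Proof.
move=> n0 dn; have d0 : (0 < d)%N by apply: dvdn_gt0 n0 dn.
have q0 : (0 < n %/ d)%N by rewrite divn_gt0 // dvdn_leq.
by rewrite -{1}(divnK dn) mulnC mulnK.
Qed.

Lemma sum_divisors_reindex (phi : nat -> R) n : (0 < n)%N ->
  \sum_(d <- divisors n) phi (n %/ d)%N = \sum_(e <- divisors n) phi e.
Proof.
move=> n0; rewrite -(big_map (fun d => (n %/ d)%N) xpredT phi); apply: perm_big.
apply: uniq_perm.
- rewrite map_inj_in_uniq ?divisors_uniq // => d1 d2.
  rewrite -!dvdn_divisors // => h1 h2 e.
  by rewrite -(div_div_id n0 h1) e div_div_id.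
- exact: divisors_uniq.
move=> e; apply/mapP/idP.
  by case=> d; rewrite -!dvdn_divisors // => dn ->; apply: dvdn_div.
rewrite -dvdn_divisors // => en; exists (n %/ e)%N; last by rewrite div_div_id.
by rewrite -dvdn_divisors // dvdn_div.
Qed.

Lemma sum_divisors_le (phi : nat -> R) n : (0 < n)%N -> (forall e, 0 <= phi e) ->
  \sum_(e <- divisors n) phi e <= \sum_(0 <= e < n.+1) phi e.
Proof.
move=> n0 hp.
have pe : perm_eq (divisors n) [seq e <- index_iota 0 n.+1 | e \in divisors n].
  apply: uniq_perm; [exact: divisors_uniq | by rewrite filter_uniq // iota_uniq | move=> e].
  rewrite mem_filter mem_index_iota; case: (boolP (e \in divisors n)) => //= hd.
  by rewrite -dvdn_divisors // in hd; rewrite ltnS dvdn_leq.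
rewrite (perm_big _ pe) big_filter [X in _ <= X](bigID (mem (divisors n))) /= lerDl.
by apply: sumr_ge0 => e _.
Qed.


Lemma powR_natD (e : nat) (a b : R) : (0 < e)%N ->
  (e%:R : R) `^ (a + b) = e%:R `^ a * e%:R `^ b.
Proof. by move=> e0; rewrite powRD // pnatr_eq0 -lt0n e0 implybT. Qed.

Lemma g_bound (f g : nat -> R) N (C gamma s : R) :
  f 1%N = 1 -> (1 <= N)%N -> 0 < C ->
  (forall n, (2 <= n <= N)%N -> f n = 0) ->
  (forall n, (N < n)%N -> `|f n| <= C * (n%:R `^ gamma)) ->
  dirichlet_inverse f g -> 1 < s ->
  (forall k, P s k - P s N.+1 <= C^-1) ->
  forall n, (0 < n)%N ->
    `|g n| <= (if (2 <= n <= N)%N then 0 else n%:R `^ (gamma + s)).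
Proof.
move=> hf1 N1 C0 hf0 hfC hg s1 hT.
set phi := fun e : nat => if (N < e)%N then tt s e else 0.
have phi0 e : 0 <= phi e by rewrite /phi; case: ifP => _ //; exact: tt_ge0.
elim/ltn_ind => n IH n0.
case: (eqVneq n 1%N) => [->|n1].
  have := hg 1%N isT; rewrite (_ : divisors 1 = [:: 1%N]) // big_seq1 divnn /= hf1 mul1r => ->.
  by rewrite /= powR1 normr1.
have n2 : (2 <= n)%N by case: n n0 n1 IH => [|[|]].
have Cn0 : 0 <= C * (n%:R : R) `^ (gamma + s) by apply: mulr_ge0; [exact: ltW | exact: powR_ge0].
have main : `|g n| <= C * n%:R `^ (gamma + s) * \sum_(d <- divisors n) phi (n %/ d)%N.
  have E := hg n n0.
  rewrite (big_rem n) ?divisors_id // divnn n0 hf1 mul1r (negbTE n1) in E.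
  have -> : g n = - \sum_(d <- rem n (divisors n)) f (n %/ d)%N * g d.
    by apply/eqP; rewrite -addr_eq0; apply/eqP; exact: E.
  rewrite normrN; apply: le_trans (ler_norm_sum _ _ _) _.
  apply: le_trans (_ : \sum_(d <- rem n (divisors n)) C * n%:R `^ (gamma + s) * phi (n %/ d)%N <= _); last first.
    rewrite -mulr_sumr; apply: ler_wpM2l => //.
    rewrite [X in _ <= X](big_rem n) ?divisors_id //= lerDr; exact: phi0.
  rewrite big_seq [X in _ <= X]big_seq; apply: ler_sum => d hd.
  have uq := divisors_uniq n.
  move: hd; rewrite mem_rem_uniq // inE => /andP[dn hdd].
  rewrite -dvdn_divisors // in hdd.
  have d0 : (0 < d)%N := dvdn_gt0 n0 hdd.
  have dlt : (d < n)%N by rewrite ltn_neqAle dn dvdn_leq.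
  have ne : (n %/ d * d)%N = n by rewrite divnK.
  move: ne; set e := (n %/ d)%N => ne.
  have e2 : (2 <= e)%N.
    move: ne; case: (e) => [|[|e']] ne //.
      by rewrite mul0n in ne; rewrite -ne in n0.
    by rewrite mul1n in ne; rewrite ne eqxx in dn.
  have e0 : (0 < e)%N by apply: leq_trans e2.
  rewrite normrM.
  case: (ltnP N e) => Ne.
  - have hfe := hfC e Ne.
    rewrite /phi Ne.
    have hgd := IH d dlt d0.
    case: ifP hgd => hdN hgd.
      have -> : `|g d| = 0 by apply/eqP; rewrite eq_le normr_ge0 andbT.
      rewrite mulr0; apply: mulr_ge0 => //; exact: tt_ge0.
    apply: le_trans (_ : C * e%:R `^ gamma * d%:R `^ (gamma + s) <= _).
      apply: ler_pM => //; exact: normr_ge0.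
    have es : 0 < (e%:R : R) `^ s by apply: powR_gt0; rewrite ltr0n.
    rewrite -ne natrM powRM // powR_natD // /tt powRN.
    rewrite le_eqVlt; apply/orP; left; apply/eqP.
    rewrite (powR_natD _ _ e0); field; by rewrite gt_eqF.
  - rewrite hf0 ?e2 // normr0 mul0r /phi ltnNge Ne /= mulr0 //.
case: ifP => hnN.
  have hs : \sum_(d <- divisors n) phi (n %/ d)%N = 0.
    rewrite big1_seq // => d _; rewrite /phi ltnNge.
    by move/andP: hnN => [_ hN]; rewrite (leq_trans (leq_div n d) hN).
  by move: main; rewrite hs mulr0.
have Nn : (N < n)%N by rewrite ltnNge; apply/negP => hN; move: hnN; rewrite n2 hN.
have hsum : \sum_(0 <= e < n.+1) phi e = P s n.+1 - P s N.+1.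
  rewrite (@big_cat_nat _ _ _ N.+1) //=; last by rewrite ltnS ltnW.
  rewrite big_nat_cond big1 ?add0r; last first.
    by move=> e /andP[/andP[_ he] _]; rewrite /phi ltnNge -ltnS he.
  rewrite /P [X in _ = X - _](@big_cat_nat _ _ _ N.+1) //=; last by rewrite ltnS ltnW.
  rewrite addrC addrK; apply: eq_big_nat => e /andP[he _].
  by rewrite /phi he.
have hS : \sum_(d <- divisors n) phi (n %/ d)%N <= C^-1.
  rewrite sum_divisors_reindex //; apply: le_trans (sum_divisors_le n0 phi0) _.
  by rewrite hsum.
apply: le_trans main _.
apply: le_trans (ler_wpM2l Cn0 hS) _.
by rewrite mulrAC divff ?mul1r // gt_eqF.
Qed.

End Z.

Unset Implicit Arguments. Set Strict Implicit.
Local Close Scope classical_set_scope.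

Theorem proposition3p15 (R : realType) (f g : nat -> R) (N : nat) (C gamma : R) :
  f 1%N = 1 ->
  (2 <= N)%N ->
  0 < C ->
  (forall n : nat, (2 <= n <= N)%N -> f n = 0) ->
  (forall n : nat, (N < n)%N -> `|f n| <= C * (n%:R `^ gamma)) ->
  dirichlet_inverse f g ->
  (exists! s : R, 1 < s /\
     zeta s = C^-1 + \sum_(1 <= m < N.+1) ((m%:R : R) `^ (- s))) /\
  (forall s : R, 1 < s ->
     zeta s = C^-1 + \sum_(1 <= m < N.+1) ((m%:R : R) `^ (- s)) ->
     forall n : nat, (N < n)%N -> `|g n| <= (n%:R : R) `^ (gamma + s)).
Proof.
Local Open Scope classical_set_scope.
move=> hf1 N2 C0 hf0 hfC hg.
have N0 : (0 < N)%N by apply: leq_trans N2.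
have Ci0 : 0 < C^-1 by rewrite invr_gt0.
have eqT (s : R) : (zeta s = C^-1 + \sum_(1 <= m < N.+1) ((m%:R : R) `^ (- s))) <-> T N s = C^-1.
  rewrite /T /P /tt; split => h; lra.
split.
  have [a [a1 ha]] := T_big N Ci0.
  have [b [b1 hb]] := T_small N0 Ci0.
  have ab : a <= b.
    rewrite leNgt; apply/negP => ba.
    have := T_strict N0 b1 ba; lra.
  have cont : {within `[a, b], continuous (T N)}.
    rewrite continuous_subspace_in => x xin.
    apply: (@continuous_subspaceT_for R R `[a, b] (T N) x); first by move: xin; rewrite inE.
    apply: T_cont; move: xin; rewrite inE /= in_itv /= => /andP[ax _]; lra.
  have hv : Num.min (T N a) (T N b) <= C^-1 <= Num.max (T N a) (T N b).
    by rewrite ge_min le_max hb ha orbT.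
  have [c cin hc] := IVT ab cont hv.
  have c1 : 1 < c by move: cin; rewrite in_itv /= => /andP[ac _]; lra.
  exists c; split; first by split => //; apply/eqT.
  move=> y [y1 /eqT hy].
  case: (ltgtP c y) => // cy.
    by have := T_strict N0 c1 cy; lra.
  by have := T_strict N0 y1 cy; lra.
move=> s s1 hs n hn.
have hT : forall k, P s k - P s N.+1 <= C^-1.
  move=> k; have := P_le_zeta k s1; move: hs; rewrite /P /tt => hs; lra.
have := g_bound hf1 N0 C0 hf0 hfC hg s1 hT (ltn_trans N0 hn).
by rewrite [(n <= N)%N]leqNgt hn andbF.
Qed.
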